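(* Every permutation $(a_1,a_2,a_3,\ldots)$ of the positive integers contains a 3-term arithmetic progression with odd common difference as a subsequence.
   Context: A permutation of the positive integers is a sequence $(a_1,a_2,\ldots)$ in which every positive integer appears exactly once. A sequence contains a $k$-term arithmetic progression with common difference $d\neq 0$ as a subsequence if there are indices $i_1<i_2<\cdots<i_k$ with $a_{i_{m+1}} - a_{i_m} = d$ for all $1\le m<k$. The difference $d$ may be positive or negative. *)

(* Defs.v *)
From Stdlib Require Import ZArith.
Open Scope Z_scope.

(* A permutation of the positive integers, as a sequence a : nat -> Z
   (index i corresponds to a_{i+1}): every positive integer appears exactly once,
   and every term is a positive integer. *)
Definition is_perm_pos (a : nat -> Z) : Prop :=
  (forall i, 0 < a i) /\ (forall n, 0 < n -> exists! i, a i = n).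

Definition has_3AP_diff (a : nat -> Z) (d : Z) : Prop :=
  d <> 0 /\ exists i1 i2 i3 : nat, (i1 < i2 < i3)%nat /\
    a i2 - a i1 = d /\ a i3 - a i2 = d.

(* Main.v *)
Require Import Defs.
From Stdlib Require Import ZArith Lia Classical.
Open Scope Z_scope.

Fixpoint mx (a : nat -> Z) (n : nat) : Z :=
  match n with O => a O | S n' => Z.max (a (S n')) (mx a n') end.

Lemma mx_ge (a : nat -> Z) : forall n i, (i <= n)%nat -> a i <= mx a n.
Proof.
  induction n; intros i Hi; simpl.
  - assert (i = O) by lia; subst; lia.
  - destruct (Nat.eq_dec i (S n)); [subst; lia|].
    specialize (IHn i ltac:(lia)); lia.
Qed.

Theorem theorem2 : forall a : nat -> Z, is_perm_pos a ->
  exists d : Z, Z.Odd d /\ has_3AP_diff a d.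
Proof.
  intros a [Hpos Hsurj].
  destruct (classic (exists d : Z, Z.Odd d /\ has_3AP_diff a d))
    as [H|H]; [exact H|exfalso].
  assert (L : forall i j k, (i < j)%nat -> Z.Odd (a j - a i) ->
            a k = 2 * a j - a i -> (k < j)%nat).
  { intros i j k Hij Hod Hk.
    destruct (Nat.lt_ge_cases k j) as [|Hge]; [assumption|].
    destruct (Nat.eq_dec k j) as [->|Hne].
    - exfalso. assert (a j - a i = 0) by lia. rewrite H0 in Hod.
      destruct Hod as [q Hq]; lia.
    - exfalso; apply H. exists (a j - a i). split; [exact Hod|].
      split. { intro Z0; rewrite Z0 in Hod; destruct Hod as [q Hq]; lia. }
      exists i, j, k. split; [lia|]. split; lia. }
  assert (Hex : forall n, 0 < n -> exists i, a i = n).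
  { intros n Hn. destruct (Hsurj n Hn) as [i [Hi _]]. eauto. }
  set (m := a O).
  assert (Hm : 0 < m) by apply Hpos.
  destruct (Hex (m + 1) ltac:(lia)) as [iy Hiy].
  set (B := mx a iy).
  assert (Claim : forall n k, (k < n)%nat -> forall e, a k = e ->
            Z.Even (e - m) -> e > B -> e > 3 * m + 2 -> False).
  { induction n; intros k Hk e Hke Hev HB H3; [lia|].
    assert (Hky : (iy < k)%nat).
    { destruct (Nat.lt_ge_cases iy k) as [|Hle]; [assumption|].
      pose proof (mx_ge a iy k Hle) as Hmx. unfold B in HB. lia. }
    destruct Hev as [q Hq].
    destruct (Hex (2 * e - (m + 1)) ltac:(lia)) as [kw Hkw].
    assert (Hkw_lt : (kw < k)%nat).
    { apply (L iy k kw Hky); rewrite ?Hke, ?Hiy, ?Hkw; [exists (q-1)|]; lia. }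
    assert (Hkw0 : (0 < kw)%nat).
    { destruct kw; [|lia]. exfalso. fold m in Hkw. lia. }
    destruct (Hex (2 * (2 * e - (m + 1)) - m) ltac:(lia)) as [ke Hke'].
    assert (Hke_lt : (ke < kw)%nat).
    { apply (L O kw ke Hkw0); fold m; rewrite ?Hkw, ?Hke'; [exists (2*q - 1)|]; lia. }
    apply (IHn ke ltac:(lia) _ Hke'); [exists (4*q - 1); lia | lia | lia]. }
  set (e0 := 5 * m + 2 * Z.abs B + 4).
  destruct (Hex e0 ltac:(lia)) as [k0 Hk0].
  apply (Claim (S k0) k0 ltac:(lia) e0 Hk0); [exists (2*m + Z.abs B + 2); lia | lia | lia].
Qed.
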